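(* Let $U\subseteq\mathbb{R}^d$ be open and convex, let $h:U\to\mathbb{R}$ be convex and twice continuously differentiable, let $f:U\to\mathbb{R}$ be continuously differentiable, let $\mu>0$, and let $\alpha,\beta,\gamma:\mathbb{R}\to\mathbb{R}$ be smooth functions. Define the (second Bregman) Lagrangian $$\mathcal{L}(x,v,t)=e^{\alpha_t+\gamma_t+\beta_t}\Big(\mu\, D_h\big(x+e^{-\alpha_t}v,\;x\big)-f(x)\Big),$$ for $(x,v,t)$ with $x,\,x+e^{-\alpha_t}v\in U$. Assume $\dot\gamma_t=e^{\alpha_t}$ for all $t$. Then a twice differentiable curve $t\mapsto X_t$ satisfies the Euler–Lagrange equation $$\frac{\partial\mathcal{L}}{\partial x}(X_t,\dot X_t,t)=\frac{d}{dt}\frac{\partial\mathcal{L}}{\partial v}(X_t,\dot X_t,t)$$ if and only if $$\frac{d}{dt}\nabla h\big(X_t+e^{-\alpha_t}\dot X_t\big)=\dot\beta_t\,\nabla h(X_t)-\dot\beta_t\,\nabla h\big(X_t+e^{-\alpha_t}\dot X_t\big)-\frac{e^{\alpha_t}}{\mu}\nabla f(X_t).$$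
   Context: The Bregman divergence of $h$ is $D_h(y,x)=h(y)-h(x)-\langle\nabla h(x),y-x\rangle$. Dots denote time derivatives. *)

(* Defs.v *)
From HB Require Import structures.
From mathcomp Require Import all_boot all_order all_algebra.
From mathcomp Require Import all_classical all_reals all_analysis.
Set Implicit Arguments. Unset Strict Implicit. Unset Printing Implicit Defensive.
Import Order.TTheory GRing.Theory Num.Theory.
Import numFieldNormedType.Exports.
Local Open Scope classical_set_scope.
Local Open Scope ring_scope.

Section Defs.
Variables (R : realType) (d : nat).
Implicit Types (U : set 'rV[R]_d) (f : 'rV[R]_d -> R).

Definition basis_vec (i : 'I_d) : 'rV[R]_d := delta_mx 0 i.

Definition partial (i : 'I_d) f (x : 'rV[R]_d) : R := 'D_(basis_vec i) f x.

Definition grad f (x : 'rV[R]_d) : 'rV[R]_d := \row_i partial i f x.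

Definition dotp (u v : 'rV[R]_d) : R := \sum_i u 0 i * v 0 i.

Definition bregman f (y x : 'rV[R]_d) : R := f y - f x - dotp (grad f x) (y - x).

Definition convex_on U f : Prop :=
  forall x y, U x -> U y -> forall l : R, 0 <= l <= 1 ->
    f (l *: x + (1 - l) *: y) <= l * f x + (1 - l) * f y.

Definition C1_on U f : Prop :=
  (forall x, U x -> differentiable f x) /\
  (forall i, {within U, continuous (partial i f)}).

Definition C2_on U f : Prop := C1_on U f /\ (forall i, C1_on U (partial i f)).

End Defs.

Definition smooth (R : realType) (g : R -> R) : Prop :=
  forall (n : nat) (t : R), derivable (derive1n n g) t 1.

Definition twice_diff_curve (R : realType) (d : nat) (X : R -> 'rV[R]_d) : Prop :=
  (forall t : R, derivable X t 1) /\ (forall t : R, derivable (derive1 X) t 1).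

Definition bregman_lagrangian (R : realType) (d : nat)
  (h f : 'rV[R]_d -> R) (mu : R) (a b g : R -> R)
  (x v : 'rV[R]_d) (t : R) : R :=
  expR (a t + g t + b t) *
    (mu * bregman h (x + expR (- a t) *: v) x - f x).

(* Main.v *)
Require Import Defs.
From HB Require Import structures.
From mathcomp Require Import all_boot all_order all_algebra.
From mathcomp Require Import all_classical all_reals all_analysis.
From mathcomp Require Import ring lra.
Import Order.TTheory GRing.Theory Num.Theory.
Import numFieldNormedType.Exports.
Local Open Scope classical_set_scope.
Local Open Scope ring_scope.
Set Implicit Arguments. Unset Strict Implicit. Unset Printing Implicit Defensive.

Lemma partialE (R : realType) (d : nat) (F : 'rV[R]_d -> R) p i :
  differentiable F p -> partial i F p = 'd F p (basis_vec R i).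
Proof. by move=> dF; rewrite /partial deriveE. Qed.

Lemma diff_sum_partial (R : realType) (d : nat) (F : 'rV[R]_d -> R) p v :
  differentiable F p -> 'd F p v = \sum_j v 0 j * partial j F p.
Proof.
move=> dF; rewrite [in LHS](row_sum_delta v) linear_sum.
apply: eq_bigr => j _; rewrite linearZ /= partialE //.
Qed.

Lemma isd_Ml (R : realType) (V : normedModType R) (F : V -> R) (k : R) x v a :
  is_derive x v F a -> is_derive x v (fun y => k * F y) (k * a).
Proof.
move=> [dF <-]; have := @is_deriveZ R V R F k x v _ (derivableP dF).
by [].
Qed.

Lemma isd_Mr (R : realType) (V : normedModType R) (F : V -> R) (k : R) x v a :
  is_derive x v F a -> is_derive x v (fun y => F y * k) (a * k).
Proof.
move=> H; have := isd_Ml k H.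
under eq_fun do rewrite mulrC. by rewrite mulrC.
Qed.

Lemma isd_D (R : realType) (V W : normedModType R) (F G : V -> W) x v a b :
  is_derive x v F a -> is_derive x v G b -> is_derive x v (fun y => F y + G y) (a + b).
Proof. move=> H1 H2; exact: (is_deriveD H1 H2). Qed.

Lemma isd_B (R : realType) (V W : normedModType R) (F G : V -> W) x v a b :
  is_derive x v F a -> is_derive x v G b -> is_derive x v (fun y => F y - G y) (a - b).
Proof. move=> H1 H2; exact: (is_deriveB H1 H2). Qed.

Lemma isd_cst (R : realType) (V W : normedModType R) (c : W) (x v : V) :
  is_derive x v (fun _ => c) 0.
Proof. exact: is_derive_cst. Qed.

Lemma isd_M (R : realType) (V : normedModType R) (F G : V -> R) x v a b :
  is_derive x v F a -> is_derive x v G b ->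
  is_derive x v (fun y => F y * G y) (F x * b + a * G x).
Proof.
move=> H1 H2; have := is_deriveM H1 H2.
move=> H; apply: is_derive_eq H _.
by change (F x * b + G x * a = F x * b + a * G x); rewrite (mulrC a).
Qed.

Lemma isd_sum (R : realType) (V W : normedModType R) n (F : 'I_n -> V -> W) x v a :
  (forall j, is_derive x v (F j) (a j)) ->
  is_derive x v (fun y => \sum_(j < n) F j y) (\sum_(j < n) a j).
Proof.
move=> H; have := is_derive_sum H.
suff -> : (\sum_(j < n) F j) = (fun y => \sum_(j < n) F j y) by [].
by apply/funext => y; rewrite fct_sumE.
Qed.
Lemma isd_shift (R : realType) (V W : normedModType R) (F : V -> W) x w v a :
  is_derive (x + w) v F a -> is_derive x v (fun y => F (y + w)) a.
Proof.
move=> [dF <-].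
have E : (fun h : R => h^-1 *: (((fun y => F (y + w)) \o shift x) (h *: v) - F (x + w)))
   = (fun h : R => h^-1 *: ((F \o shift (x + w)) (h *: v) - F (x + w))).
  by apply/funext => h /=; rewrite addrA.
split; rewrite /derivable /derive /=.
  by rewrite E.
by rewrite E.
Qed.

Lemma isd_aff (R : realType) (V W : normedModType R) (F : V -> W) x v k :
  (forall r : R, F (r *: v + x) - F x = r *: k) -> is_derive x v F k.
Proof.
move=> H.
have E : {near 0^', (fun h : R => h^-1 *: ((F \o shift x) (h *: v) - F x)) =1 cst k}.
  near=> h => /=; rewrite H scalerA mulVf ?scale1r //.
  by near: h; exact: nbhs_dnbhs_neq.
split.
  by apply: (is_cvg_near_cst k); apply: filterS E.
by apply/lim_near_cst => //; apply: filterS E.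
Unshelve. all: by end_near. Qed.

Lemma chainV (R : realType) (V W : normedModType R) (F : W -> R) (Y : V -> W) x v :
  differentiable Y x -> differentiable F (Y x) ->
  is_derive x v (fun y => F (Y y)) ('d F (Y x) ('d Y x v)).
Proof.
move=> dY dF.
have dFY : differentiable (F \o Y) x by exact: differentiable_comp.
split; first exact: diff_derivable.
by rewrite (deriveE v dFY) diff_comp.
Qed.

Lemma chain1 (R : realType) (W : normedModType R) (F : W -> R) (Y : R -> W) t :
  derivable Y t 1 -> differentiable F (Y t) ->
  is_derive t 1 (fun s => F (Y s)) ('d F (Y t) ('D_1 Y t)).
Proof.
move=> /derivable1_diffP dY dF.
by rewrite deriveE //; apply: chainV.
Qed.

Lemma line_der (R : realType) (W : normedModType R) (F : W -> R) q a (r : R) :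
  differentiable F (q + r *: a) ->
  is_derive r 1 (fun s : R => F (q + s *: a)) ('D_a F (q + r *: a)).
Proof.
move=> dF.
have HY : is_derive r 1 (fun s : R => q + s *: a) a.
  apply: isd_aff => h; rewrite scalerDl addrCA addrK.
  by rewrite [h%:A]mulr1.
have := chain1 (@ex_derive _ _ _ _ _ _ _ HY) dF.
by rewrite derive_val -deriveE.
Qed.

Lemma comp_scaled (R : realType) (W : normedModType R) (F : W -> R) p (c : R) q v :
  differentiable F (p + c *: q) ->
  is_derive q v (fun u => F (p + c *: u)) (c * 'D_v F (p + c *: q)).
Proof.
move=> dF.
have HY : is_diff q (fun u : W => p + c *: u) (fun u => c *: u).
  have H : is_diff q (cst p + *:%R c) (0 + *:%R c) by exact: is_diffD.
  rewrite add0r in H; exact: H.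
have dY : differentiable (fun u : W => p + c *: u) q by exact: ex_diff.
have := chainV v dY dF.
rewrite diff_val (deriveE v dF).
by rewrite linearZ.
Qed.
Lemma mvt2 (R : realType) (d : nat) (U : set 'rV[R]_d) (h : 'rV[R]_d -> R) p i j (s : R) :
  0 < s ->
  (forall q, U q -> differentiable h q) ->
  (forall q, U q -> differentiable (partial i h) q) ->
  (forall u w, 0 <= u <= s -> 0 <= w <= s ->
     U (p + u *: basis_vec R i + w *: basis_vec R j)) ->
  exists u w, [/\ 0 <= u <= s, 0 <= w <= s &
    h (p + s *: basis_vec R i + s *: basis_vec R j) - h (p + s *: basis_vec R i)
    - h (p + s *: basis_vec R j) + h p
    = s * s * partial j (partial i h) (p + u *: basis_vec R i + w *: basis_vec R j)].
Proof.
set a := basis_vec R i; set b := basis_vec R j.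
move=> s0 Hd Hdi HU.
have Hs : forall r, r \in `[0, s] -> 0 <= r <= s.
  by move=> r; rewrite in_itv.
pose phi := fun r : R => h ((p + s *: b) + r *: a) - h (p + r *: a).
pose dphi := fun r : R => partial i h ((p + s *: b) + r *: a) - partial i h (p + r *: a).
have U1 r : 0 <= r <= s -> U ((p + s *: b) + r *: a).
  by move=> hr; rewrite addrAC; apply: HU => //; rewrite lexx ltW.
have U2 r : 0 <= r <= s -> U (p + r *: a).
  by move=> hr; rewrite -[p + r *: a]addr0 -[X in _ + X](scale0r b); apply: HU => //; rewrite lexx ltW.
have Dphi r : 0 <= r <= s -> is_derive r 1 phi (dphi r).
  move=> hr; apply: isd_B; apply: line_der; [exact: Hd (U1 r hr)|exact: Hd (U2 r hr)].
have [u1 u1I E1] := MVT s0 (fun x xI => Dphi x (Hs x (subset_itv_oo_cc xI)))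
  (derivable_within_continuous (fun x xI => @ex_derive _ _ _ _ _ _ _ (Dphi x (Hs x xI)))).
have u1s : 0 <= u1 <= s by apply: Hs; exact: subset_itv_oo_cc.
pose psi := fun r : R => partial i h ((p + u1 *: a) + r *: b).
have Dpsi r : 0 <= r <= s -> is_derive r 1 psi (partial j (partial i h) ((p + u1 *: a) + r *: b)).
  move=> hr; apply: line_der; apply: Hdi; exact: HU.
have [w1 w1I E2] := MVT s0 (fun x xI => Dpsi x (Hs x (subset_itv_oo_cc xI)))
  (derivable_within_continuous (fun x xI => @ex_derive _ _ _ _ _ _ _ (Dpsi x (Hs x xI)))).
have w1s : 0 <= w1 <= s by apply: Hs; exact: subset_itv_oo_cc.
exists u1, w1; split => //.
move: E1 E2; rewrite /phi /dphi /psi !scale0r !addr0 subr0 => E1 E2.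
rewrite [p + s *: b + u1 *: a]addrAC E2 [p + s *: b + s *: a]addrAC in E1.
rewrite [RHS]mulrC mulrA -E1; ring.
Qed.
Lemma norm_basis (R : realType) (d : nat) (i : 'I_d) : `|basis_vec R i| <= 1.
Proof.
rewrite [leLHS]/Num.Def.normr/= mx_normrE (bigmax_le _ ler01) //= => -[k l] _.
rewrite /basis_vec mxE; case: (_ && _) => /=; by rewrite ?normr1 ?normr0.
Qed.

Lemma norm2 (R : realType) (d : nat) (i j : 'I_d) (u w : R) :
  `|u *: basis_vec R i + w *: basis_vec R j| <= `|u| + `|w|.
Proof.
apply: (le_trans (ler_normD _ _)); rewrite !normrZ.
by apply: lerD; rewrite -[leRHS]mulr1 ler_wpM2l // norm_basis.
Qed.

Lemma cont_at_open (R : realType) (d : nat) (U : set 'rV[R]_d) (g : 'rV[R]_d -> R) (p : 'rV[R]_d) :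
  open U -> U p -> {within U, continuous g} -> {for p, continuous g}.
Proof.
move=> oU Up; rewrite continuous_open_subspace // => H; exact: (H p (mem_set Up)).
Qed.

Lemma alg_eq (R : realType) (s A A' B C D G1 G2 : R) : 0 < s ->
  A - B - C + D = s * s * G1 -> A' - C - B + D = s * s * G2 -> A' = A -> G1 = G2.
Proof.
move=> s0 E1 E2 EA; apply: (@mulfI _ (s * s)); first by rewrite mulf_neq0 // gt_eqF.
by rewrite -E1 -E2 EA; ring.
Qed.

Lemma alg_fin (R : realType) (a b c c' e : R) :
  `|b - c| < e / 2 -> `|a - c'| < e / 2 -> c = c' -> `|a - b| <= e.
Proof.
move=> H1 H2 E; subst c'.
have -> : a - b = (a - c) + (c - b) by ring.
apply: (le_trans (ler_normD _ _)); rewrite [leRHS](splitr e).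
by apply: lerD; apply: ltW => //; rewrite distrC.
Qed.

Lemma schwarz (R : realType) (d : nat) (U : set 'rV[R]_d) (h : 'rV[R]_d -> R) (p : 'rV[R]_d) i j :
  open U -> U p ->
  (forall q, U q -> differentiable h q) ->
  (forall k q, U q -> differentiable (partial k h) q) ->
  (forall k l, {within U, continuous (partial l (partial k h))}) ->
  partial i (partial j h) p = partial j (partial i h) p.
Proof.
move=> oU Up Hd Hdk Hc.
have c1 := cont_at_open oU Up (Hc i j).
have c2 := cont_at_open oU Up (Hc j i).
apply/eqP; rewrite -subr_eq0 -normr_le0; apply/ler_addgt0Pr => e e0; rewrite add0r.
have e20 : 0 < e / 2 by rewrite divr_gt0.
have N1 : nbhs p U := @open_nbhs_nbhs _ p U (conj oU Up).
have N2 : \forall x \near p, `|partial j (partial i h) p - partial j (partial i h) x| < e / 2 by move/cvgrPdist_lt: c1; apply.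
have N3 : \forall x \near p, `|partial i (partial j h) p - partial i (partial j h) x| < e / 2 by move/cvgrPdist_lt: c2; apply.
have N := filterI N1 (filterI N2 N3).
have [r r0 Hr] := (nbhs_ballP p _).1 (N _ _).
pose s := r / 3.
have s0 : 0 < s by rewrite divr_gt0.
have Hb : forall u w, 0 <= u <= s -> 0 <= w <= s -> forall k l,
    ball p r (p + u *: basis_vec R k + w *: basis_vec R l).
  move=> u w /andP[u0 us] /andP[w0 ws] k l.
  rewrite -ball_normE /= -addrA opprD addrA subrr add0r normrN.
  apply: (le_lt_trans (norm2 _ _ _ _)); rewrite !ger0_norm //.
  have -> : r = 3 * s by rewrite /s mulrC divfK.
  lra.
have [u1 [w1 [u1s w1s E1]]] := mvt2 (p:=p) (i:=i) (j:=j) s0 Hd (Hdk i)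
  (fun u w hu hw => (Hr _ (Hb u w hu hw i j)).1).
have [u2 [w2 [u2s w2s E2]]] := mvt2 (p:=p) (i:=j) (j:=i) s0 Hd (Hdk j)
  (fun u w hu hw => (Hr _ (Hb u w hu hw j i)).1).
have Eg := alg_eq s0 E1 E2 (congr1 h (addrAC p (s *: basis_vec R j) (s *: basis_vec R i))).
have [_ [A1 _]] := Hr _ (Hb u1 w1 u1s w1s i j).
have [_ [_ A2]] := Hr _ (Hb u2 w2 u2s w2s j i).
exact: (alg_fin A1 A2 Eg).
Qed.
Lemma isd_of_diff (R : realType) (V W : normedModType R) (F : V -> W) x v :
  differentiable F x -> is_derive x v F ('D_v F x).
Proof. by move=> dF; apply: derivableP; apply: diff_derivable. Qed.

Lemma sum_basis (R : realType) (d : nat) (F : 'I_d -> R) i :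
  \sum_j F j * basis_vec R i 0 j = F i.
Proof.
rewrite (bigD1 i) //= /basis_vec mxE !eqxx mulr1 big1 ?addr0 // => j ji.
by rewrite mxE (negbTE ji) andbF mulr0.
Qed.

Lemma gradx_comp (R : realType) (d : nat) (h f : 'rV[R]_d -> R) mu (a b g : R -> R)
    (x0 v : 'rV[R]_d) t i :
  differentiable h (x0 + expR (- a t) *: v) -> differentiable h x0 ->
  (forall j, differentiable (partial j h) x0) -> differentiable f x0 ->
  partial i (fun x => bregman_lagrangian h f mu a b g x v t) x0 =
  expR (a t + g t + b t) * (mu * (partial i h (x0 + expR (- a t) *: v) - partial i h x0
     - \sum_j partial i (partial j h) x0 * (expR (- a t) * v 0 j)) - partial i f x0).
Proof.
move=> dh1 dh0 dpj df0.
set c := expR (- a t); set E := expR (a t + g t + b t); set w := c *: v.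
have -> : (fun x => bregman_lagrangian h f mu a b g x v t) =
   fun x => E * (mu * (h (x + w) - h x - \sum_j partial j h x * (c * v 0 j)) - f x).
  apply/funext => x; rewrite /bregman_lagrangian /bregman /dotp [x + w]addrC addrK.
  congr (_ * (_ * (_ - _ - _) - _)); apply: eq_bigr => j _; rewrite !mxE //.
have H := isd_Ml E (isd_B (isd_Ml mu (isd_B (isd_B (isd_shift (isd_of_diff (basis_vec R i) dh1))
   (isd_of_diff (basis_vec R i) dh0))
   (isd_sum (fun j => isd_Mr (c * v 0 j) (isd_of_diff (basis_vec R i) (dpj j))))))
   (isd_of_diff (basis_vec R i) df0)).
by case: H => _ HH; exact: HH.
Qed.
Lemma isd_coord (R : realType) (d : nat) (v e : 'rV[R]_d) j :
  is_derive v e (fun u : 'rV[R]_d => u 0 j) (e 0 j).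
Proof. apply: isd_aff => r; rewrite !mxE addrK; reflexivity. Qed.

Lemma gradv_comp (R : realType) (d : nat) (h f : 'rV[R]_d -> R) mu (a b g : R -> R)
    (x0 v : 'rV[R]_d) t i :
  differentiable h (x0 + expR (- a t) *: v) ->
  partial i (fun u => bregman_lagrangian h f mu a b g x0 u t) v =
  expR (a t + g t + b t) * (mu * (expR (- a t) * partial i h (x0 + expR (- a t) *: v)
     - expR (- a t) * partial i h x0)).
Proof.
move=> dh1.
set c := expR (- a t); set E := expR (a t + g t + b t).
have -> : (fun u => bregman_lagrangian h f mu a b g x0 u t) =
   fun u => E * (mu * (h (x0 + c *: u) - h x0 - \sum_j partial j h x0 * (c * u 0 j)) - f x0).
  apply/funext => u; rewrite /bregman_lagrangian /bregman /dotp [x0 + _]addrC addrK.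
  congr (_ * (_ * (_ - _ - _) - _)); apply: eq_bigr => j _; rewrite !mxE //.
have H := isd_Ml E (isd_B (isd_Ml mu (isd_B (isd_B (comp_scaled (basis_vec R i) dh1)
   (isd_cst (h x0) v (basis_vec R i)))
   (isd_sum (fun j => isd_Ml (partial j h x0) (isd_Ml c (isd_coord v (basis_vec R i) j))))))
   (isd_cst (f x0) v (basis_vec R i))).
case: H => _ HH; rewrite /partial HH.
under eq_bigr do rewrite mulrCA.
rewrite -mulr_sumr sum_basis.
rewrite /c /E /partial; ring.
Qed.
Lemma isd_expR_comp (R : realType) (g : R -> R) (t dg : R) :
  is_derive t 1 g dg -> is_derive t 1 (fun s => expR (g s)) (expR (g t) * dg).
Proof. move=> H; exact: (is_derive1_comp (is_derive_expR (g t)) H). Qed.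

Lemma isd_N (R : realType) (V W : normedModType R) (F : V -> W) x v a :
  is_derive x v F a -> is_derive x v (fun y => - F y) (- a).
Proof. move=> H; exact: (is_deriveN H). Qed.

Lemma dt_piece (R : realType) (K A B : R -> R) (t kd ad bd mu : R) :
  is_derive t 1 K kd -> is_derive t 1 A ad -> is_derive t 1 B bd ->
  is_derive t 1 (fun s => mu * (K s * (A s - B s)))
    (mu * (K t * (ad - bd) + kd * (A t - B t))).
Proof. move=> HK HA HB; exact: (isd_Ml mu (isd_M HK (isd_B HA HB))). Qed.

Lemma final_alg (R : realType) (mu a K cc bp A B F Ad S S' EE : R) :
  0 < mu -> 0 < K -> a * cc = 1 -> EE = a * K -> S' = cc * S ->
  (EE * (mu * (A - B - S') - F) = mu * (K * (Ad - S) + K * (a + bp) * (A - B)))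
  <-> (Ad = bp * B - bp * A - a / mu * F).
Proof.
move=> mu0 K0 acc -> ->.
have mun : mu != 0 by rewrite gt_eqF.
have Kn : K != 0 by rewrite gt_eqF.
have D : (a * K) * (mu * (A - B - cc * S) - F) - mu * (K * (Ad - S) + K * (a + bp) * (A - B))
   = mu * K * ((bp * B - bp * A - a / mu * F) - Ad).
  have -> : (a * K) * (mu * (A - B - cc * S) - F) = a * K * mu * (A - B) - (a * cc) * K * mu * S - a * K * F by ring.
  rewrite acc; field.
  exact: mun.
split => E.
  have : mu * K * ((bp * B - bp * A - a / mu * F) - Ad) = 0 by rewrite -D E subrr.
  move/eqP; rewrite mulf_eq0 (negbTE (mulf_neq0 mun Kn)) /= subr_eq0 => /eqP ->; done.
apply/eqP; rewrite -subr_eq0 D E; apply/eqP; ring.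
Qed.
Lemma iff_rw (R : realType) (a a' b b' c c' e e' : R) :
  a = a' -> b = b' -> c = c' -> e = e' -> ((a' = b') <-> (c' = e')) -> ((a = b) <-> (c = e)).
Proof. by move=> -> -> -> ->. Qed.

Lemma alg_swap (R : realType) (P Q c v : R) : P = Q -> P * (c * v) = c * (v * Q).
Proof. by move=> ->; ring. Qed.


Unset Implicit Arguments. Set Strict Implicit.

Theorem proposition1 (R : realType) (d : nat) (U : set 'rV[R]_d)
  (h f : 'rV[R]_d -> R) (mu : R) (alpha beta gamma : R -> R)
  (X : R -> 'rV[R]_d) :
  open U -> convex_set U ->
  convex_on U h -> C2_on U h -> C1_on U f -> 0 < mu ->
  smooth alpha -> smooth beta -> smooth gamma ->
  (forall t, derive1 gamma t = expR (alpha t)) ->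
  twice_diff_curve X ->
  (forall t, U (X t)) ->
  (forall t, U (X t + expR (- alpha t) *: derive1 X t)) ->
  let L := bregman_lagrangian h f mu alpha beta gamma in
  (forall t,
     grad (fun x => L x (derive1 X t) t) (X t) =
     derive1 (fun s => grad (fun v => L (X s) v s) (derive1 X s)) t)
  <->
  (forall t,
     derive1 (fun s => grad h (X s + expR (- alpha s) *: derive1 X s)) t =
     derive1 beta t *: grad h (X t)
     - derive1 beta t *: grad h (X t + expR (- alpha t) *: derive1 X t)
     - (expR (alpha t) / mu) *: grad f (X t)).
Proof.
move=> oU _ _ [[Dh _] D2h] [Df _] mu0 Sa Sb Sg Hg [DX DX2] UX UY L.
have Dph : forall k q, U q -> differentiable (partial k h) q.
  move=> k q Uq; exact: ((D2h k).1 q Uq).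
have Cph : forall k l, {within U, continuous (partial l (partial k h))}.
  move=> k l; exact: ((D2h k).2 l).
have da : forall t, derivable alpha t 1 := fun t => Sa 0%N t.
have db : forall t, derivable beta t 1 := fun t => Sb 0%N t.
have dg : forall t, derivable gamma t 1 := fun t => Sg 0%N t.
have dY : forall t, derivable (fun s => X s + expR (- alpha s) *: derive1 X s) t 1.
  move=> t.
  have H2 : derivable (fun s => expR (- alpha s) *: derive1 X s) t 1.
    apply/derivable_mxP => i0 j.
    have -> : (fun s => (expR (- alpha s) *: derive1 X s) i0 j) =
              (fun s => expR (- alpha s) * derive1 X s i0 j).
      by apply/funext => s; rewrite mxE.
    have HX2 := derivableP ((derivable_mxP _ _ _).1 (DX2 t) i0 j).
    have HE := isd_expR_comp (isd_N (derivableP (da t))).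
    exact: (@ex_derive _ _ _ _ _ _ _ (isd_M HE HX2)).
  exact: (@ex_derive _ _ _ _ _ _ _ (isd_D (derivableP (DX t)) (derivableP H2))).
pose K := fun s => expR (gamma s + beta s).
have dK : forall t : R, is_derive t 1 K (K t * (expR (alpha t) + derive1 beta t)).
  move=> t; have H := isd_expR_comp (isd_D (derivableP (dg t)) (derivableP (db t))).
  rewrite -!derive1E Hg in H; exact: H.
have iA : forall j (t : R), is_derive t 1
    (fun s => partial j h (X s + expR (- alpha s) *: derive1 X s))
    ('D_1 (fun s => partial j h (X s + expR (- alpha s) *: derive1 X s)) t).
  move=> j t; apply: derivableP.
  exact: (@ex_derive _ _ _ _ _ _ _ (chain1 (dY t) (Dph j _ (UY t)))).
have iB : forall j (t : R), is_derive t 1 (fun s => partial j h (X s))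
    (\sum_k derive1 X t 0 k * partial k (partial j h) (X t)).
  move=> j t; have H := chain1 (DX t) (Dph j _ (UX t)).
  rewrite (diff_sum_partial _ (Dph j _ (UX t))) -derive1E in H; exact: H.
have Gc : forall s i0 j, grad (fun v => L (X s) v s) (derive1 X s) i0 j =
    mu * (K s * (partial j h (X s + expR (- alpha s) *: derive1 X s) - partial j h (X s))).
  move=> s i0 j; rewrite /grad mxE /L gradv_comp; last exact: Dh _ (UY s).
  have eK : expR (alpha s + gamma s + beta s) * expR (- alpha s) = K s.
    rewrite -expRD /K; congr expR; ring.
  rewrite -eK; ring.
have dG : forall (t : R) i0 j, is_derive t 1
    (fun s => grad (fun v => L (X s) v s) (derive1 X s) i0 j)
    (mu * (K t * ('D_1 (fun s => partial j h (X s + expR (- alpha s) *: derive1 X s)) t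
              - \sum_k derive1 X t 0 k * partial k (partial j h) (X t))
           + K t * (expR (alpha t) + derive1 beta t) *
             (partial j h (X t + expR (- alpha t) *: derive1 X t) - partial j h (X t)))).
  move=> t i0 j.
  have -> : (fun s => grad (fun v => L (X s) v s) (derive1 X s) i0 j) =
     (fun s => mu * (K s * (partial j h (X s + expR (- alpha s) *: derive1 X s) - partial j h (X s)))).
    apply/funext => s; exact: Gc.
  exact: (dt_piece mu (dK t) (iA j t) (iB j t)).
have eR : forall (t : R) j,
    derive1 (fun s => grad (fun v => L (X s) v s) (derive1 X s)) t 0 j =
    mu * (K t * ('D_1 (fun s => partial j h (X s + expR (- alpha s) *: derive1 X s)) t
              - \sum_k derive1 X t 0 k * partial k (partial j h) (X t))
           + K t * (expR (alpha t) + derive1 beta t) *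
             (partial j h (X t + expR (- alpha t) *: derive1 X t) - partial j h (X t))).
  move=> t j; rewrite derive1E derive_mx; last first.
    apply/derivable_mxP => i0 k; exact: (@ex_derive _ _ _ _ _ _ _ (dG t i0 k)).
  rewrite mxE; case: (dG t 0 j) => _ HH; exact: HH.
have eT : forall (t : R) j,
    derive1 (fun s => grad h (X s + expR (- alpha s) *: derive1 X s)) t 0 j =
    'D_1 (fun s => partial j h (X s + expR (- alpha s) *: derive1 X s)) t.
  move=> t j.
  have Ef : forall i0 k, (fun s => grad h (X s + expR (- alpha s) *: derive1 X s) i0 k) =
      (fun s => partial k h (X s + expR (- alpha s) *: derive1 X s)).
    by move=> i0 k; apply/funext => s; rewrite mxE.
  rewrite derive1E derive_mx; last first.
    apply/derivable_mxP => i0 k; rewrite Ef; exact: (@ex_derive _ _ _ _ _ _ _ (iA k t)).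
  by rewrite mxE Ef.
have eL : forall (t : R) j,
    grad (fun x => L x (derive1 X t) t) (X t) 0 j =
    expR (alpha t + gamma t + beta t) * (mu * (partial j h (X t + expR (- alpha t) *: derive1 X t)
     - partial j h (X t)
     - \sum_k partial j (partial k h) (X t) * (expR (- alpha t) * derive1 X t 0 k))
     - partial j f (X t)).
  move=> t j; rewrite /grad mxE /L.
  apply: gradx_comp; [exact: Dh _ (UY t) | exact: Dh _ (UX t) | move=> k; exact: Dph k _ (UX t) | exact: Df _ (UX t)].
have comp : forall (t : R) j,
  (grad (fun x => L x (derive1 X t) t) (X t) 0 j =
     derive1 (fun s => grad (fun v => L (X s) v s) (derive1 X s)) t 0 j)
  <-> (derive1 (fun s => grad h (X s + expR (- alpha s) *: derive1 X s)) t 0 j =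
     (derive1 beta t *: grad h (X t)
     - derive1 beta t *: grad h (X t + expR (- alpha t) *: derive1 X t)
     - (expR (alpha t) / mu) *: grad f (X t)) 0 j).
  move=> t j.
  have eTR : (derive1 beta t *: grad h (X t)
     - derive1 beta t *: grad h (X t + expR (- alpha t) *: derive1 X t)
     - (expR (alpha t) / mu) *: grad f (X t)) 0 j =
     derive1 beta t * partial j h (X t)
     - derive1 beta t * partial j h (X t + expR (- alpha t) *: derive1 X t)
     - expR (alpha t) / mu * partial j f (X t).
    by rewrite !mxE.
  apply: (iff_rw (eL t j) (eR t j) (eT t j) eTR).
  apply: (final_alg (cc := expR (- alpha t))).
  - exact: mu0.
  - exact: expR_gt0.
  - rewrite -expRD subrr expR0; reflexivity.
  - rewrite /K -expRD addrA; reflexivity.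
  - rewrite mulr_sumr; apply: eq_bigr => k _.
    apply: alg_swap; exact: (schwarz j k oU (UX t) Dh Dph Cph).
split => H t.
  apply/rowP => j; move/rowP: (H t) => /(_ j) Hj; exact: ((comp t j).1 Hj).
apply/rowP => j; move/rowP: (H t) => /(_ j) Hj; exact: ((comp t j).2 Hj).
Qed.
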